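(* Let $n,k$ be positive integers with $n\ge k$ and let $1\le i\le n-k$. Let $a_{n,k}^{(i)}$ be the coefficient of $z^i$ in $\mathrm{JS}_n^k(z)$. Then $a_{n,k}^{(i)}$ is the number of ordered pairs $(Q_1,Q_2)$ of simply hooked $k$-quasi-permutations of $[n]$ such that $$Q_1^-=Q_2^-,\qquad |Q_1^-|=|Q_2^-|=i,\qquad \mathrm{pr}_y(Q_1)=\mathrm{pr}_y(Q_2).$$
   Context: $\mathrm{JS}_n^k(z)$ is defined by $\mathrm{JS}_0^0(z)=1$, $\mathrm{JS}_n^k(z)=0$ if $k\notin\{1,\dots,n\}$ (for $(n,k)\neq(0,0)$), and $\mathrm{JS}_n^k(z)=\mathrm{JS}_{n-1}^{k-1}(z)+k(k+z)\mathrm{JS}_{n-1}^k(z)$ for $n,k\ge1$. Let $[n]=\{1,\dots,n\}$. A permutation $\sigma$ of $[n]$ is identified with its diagram $\mathcal D(\sigma)=\{(i,\sigma(i)):i\in[n]\}$. For $\alpha=(i,j)\in[n]\times[n]$ put $\mathrm{pr}_x(\alpha)=i$, $\mathrm{pr}_y(\alpha)=j$, and for $Q\subseteq[n]\times[n]$ put $\mathrm{pr}_x(Q)=\{\mathrm{pr}_x(\alpha):\alpha\in Q\}$, $\mathrm{pr}_y(Q)=\{\mathrm{pr}_y(\alpha):\alpha\in Q\}$, $Q^+=\{(i,j)\in Q:i\le j\}$, $Q^-=\{(i,j)\in Q:i\ge j\}$. A simply hooked $k$-quasi-permutation of $[n]$ is a subset $Q\subseteq[n]\times[n]$ such that (i)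 $Q\subseteq\mathcal D(\sigma)$ for some permutation $\sigma$ of $[n]$, and (ii) $|Q|=n-k$ and $\mathrm{pr}_x(Q^-)\cap\mathrm{pr}_y(Q^+)=\emptyset$. *)

(* Defs.v *)
From HB Require Import structures.
From mathcomp Require Import all_boot all_order all_algebra all_fingroup.
Set Implicit Arguments. Unset Strict Implicit. Unset Printing Implicit Defensive.
Import GRing.Theory.
Local Open Scope ring_scope.

Fixpoint JS (n k : nat) : {poly int} :=
  match n with
  | 0%N => if k == 0%N then 1 else 0
  | n'.+1 =>
      if (k == 0%N) || (n'.+1 < k)%N then 0
      else JS n' k.-1 + (k%:R * (k%:R%:P + 'X)) * JS n' k
  end.

(* [n] = {1..n} is modelled by 'I_n = {0..n-1} via i |-> i+1;
   all conditions below are invariant under this shift. *)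
Definition diagram (n : nat) (s : 'S_n) : {set 'I_n * 'I_n} :=
  [set (i, s i) | i : 'I_n].

Definition prx (n : nat) (Q : {set 'I_n * 'I_n}) : {set 'I_n} := [set a.1 | a in Q].
Definition pry (n : nat) (Q : {set 'I_n * 'I_n}) : {set 'I_n} := [set a.2 | a in Q].
Definition Qplus (n : nat) (Q : {set 'I_n * 'I_n}) : {set 'I_n * 'I_n} :=
  [set a in Q | (a.1 <= a.2)%N].
Definition Qminus (n : nat) (Q : {set 'I_n * 'I_n}) : {set 'I_n * 'I_n} :=
  [set a in Q | (a.2 <= a.1)%N].

Definition simply_hooked (n k : nat) (Q : {set 'I_n * 'I_n}) : bool :=
  [exists s : 'S_n, Q \subset diagram s]
  && (#|Q| == n - k)%N
  && (prx (Qminus Q) :&: pry (Qplus Q) == set0).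

(* Main.v *)
Require Import Defs.
From HB Require Import structures.
From mathcomp Require Import all_boot all_order all_algebra all_fingroup.
From mathcomp Require Import zify ring.

Section Comb.
Variable N : nat.
Local Notation T := ('I_N * 'I_N)%type.
Implicit Types Q R : {set T}.

Definition pinj Q := [exists s : 'S_N, Q \subset diagram s].
Definition hook Q := prx (Qminus Q) :&: pry (Qplus Q) == set0.
Definition boxed n Q := [forall a in Q, (a.1 < n) && (a.2 < n)].
Definition good n k Q := [&& pinj Q, #|Q| + k == n, hook Q & boxed n Q].
Definition SS n k i := [set PQ : {set T} * {set T} | [&& good n k PQ.1, good n k PQ.2,
   Qminus PQ.1 == Qminus PQ.2, #|Qminus PQ.1| == i & pry PQ.1 == pry PQ.2]].

Lemma mem_diagram (s : 'S_N) a : (a \in diagram s) = (a.2 == s a.1).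
Proof.
apply/imsetP/eqP => [[x _ ->]|H] //=; exists a.1 => //; by case: a H => /= ? ? ->.
Qed.

Lemma pinj_inj1 Q : pinj Q -> {in Q &, forall a b, a.1 = b.1 -> a = b}.
Proof.
case/existsP => s /subsetP sub a b /sub; rewrite mem_diagram => /eqP ea /sub.
rewrite mem_diagram => /eqP eb e1; case: a b ea eb e1 => [x y][x' y'] /= -> -> -> //.
Qed.

Lemma pinj_inj2 Q : pinj Q -> {in Q &, forall a b, a.2 = b.2 -> a = b}.
Proof.
case/existsP => s /subsetP sub a b /sub; rewrite mem_diagram => /eqP ea /sub.
rewrite mem_diagram => /eqP eb e2.
have e1 : a.1 = b.1 by apply: (@perm_inj _ s); rewrite -ea -eb.
by case: a b ea eb e1 e2 => [x y][x' y'] /= _ _ -> ->.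
Qed.

Lemma card_prx Q : pinj Q -> #|prx Q| = #|Q|.
Proof. by move=> /pinj_inj1 H; apply: card_in_imset => a b ?? /= e; apply: H. Qed.

Lemma card_pry Q : pinj Q -> #|pry Q| = #|Q|.
Proof. by move=> /pinj_inj2 H; apply: card_in_imset => a b ?? /= e; apply: H. Qed.

Lemma pinj_sub Q R : Q \subset R -> pinj R -> pinj Q.
Proof. move=> sQR /existsP [s sR]; apply/existsP; exists s; exact: subset_trans sR. Qed.

Lemma mem_prx Q x : (x \in prx Q) = [exists y, (x, y) \in Q].
Proof.
apply/imsetP/existsP => [[a aQ ->]|[y yQ]]; first by exists a.2; case: a aQ.
by exists (x, y).
Qed.

Lemma mem_pry Q y : (y \in pry Q) = [exists x, (x, y) \in Q].
Proof.
apply/imsetP/existsP => [[a aQ ->]|[x xQ]]; first by exists a.1; case: a aQ.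
by exists (x, y).
Qed.

Lemma pinj_add Q x y : pinj Q -> x \notin prx Q -> y \notin pry Q -> pinj ((x, y) |: Q).
Proof.
case/existsP => s /subsetP sub xn yn.
pose x1 := (s^-1)%g y.
apply/existsP; exists (tperm x x1 * s)%g; apply/subsetP => a.
rewrite in_setU1 => /orP [/eqP ->|aQ]; rewrite mem_diagram permM /=.
  by rewrite tpermL permKV.
have ax : x != a.1 by apply: contraNneq xn => ->; apply: imset_f.
have ax1 : x1 != a.1.
  apply: contraNneq yn => e; apply/imsetP; exists a => //.
  have := sub _ aQ; rewrite mem_diagram => /eqP ->; by rewrite -e /x1 permKV.
by rewrite tpermD // -mem_diagram sub.
Qed.

Lemma hook_nodiag Q a : hook Q -> a \in Q -> a.1 != a.2.
Proof.
move=> /eqP H aQ; apply/eqP => e.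
have : a.1 \in prx (Qminus Q) :&: pry (Qplus Q).
  rewrite inE; apply/andP; split; apply/imsetP; exists a => //;
  by rewrite inE aQ /= e leqnn.
by rewrite H inE.
Qed.

Definition Bn n := [set x : 'I_N | x < n].

Lemma card_Bn n : n <= N -> #|Bn n| = n.
Proof.
move=> le.
have -> : Bn n = [set widen_ord le j | j : 'I_n].
  apply/setP => x; rewrite inE; apply/idP/imsetP => [lt|[j _ ->]] //=.
  by exists (Ordinal lt) => //; apply: val_inj.
rewrite card_imset ?card_ord // => a b /(congr1 val) /= e; exact: val_inj.
Qed.

Lemma prx_Bn n Q : boxed n Q -> prx Q \subset Bn n.
Proof.
move=> /forallP H; apply/subsetP => x /imsetP [a aQ ->]; rewrite inE.
by have /implyP/(_ aQ)/andP[] := H a.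
Qed.

Lemma pry_Bn n Q : boxed n Q -> pry Q \subset Bn n.
Proof.
move=> /forallP H; apply/subsetP => x /imsetP [a aQ ->]; rewrite inE.
by have /implyP/(_ aQ)/andP[] := H a.
Qed.

Lemma card_boxed n Q : n <= N -> pinj Q -> boxed n Q -> #|Q| <= n.
Proof.
move=> le pQ bQ; rewrite -card_prx // -(card_Bn n le); exact: subset_leq_card (prx_Bn _ _ bQ).
Qed.

Lemma card_free n Q : n <= N -> pinj Q -> boxed n Q -> #|Bn n :\: prx Q| = n - #|Q|.
Proof.
move=> le pQ bQ; rewrite cardsD card_Bn // -card_prx //.
by rewrite (setIidPr (prx_Bn _ _ bQ)).
Qed.

Lemma card_freey n Q : n <= N -> pinj Q -> boxed n Q -> #|Bn n :\: pry Q| = n - #|Q|.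
Proof.
move=> le pQ bQ; rewrite cardsD card_Bn // -card_pry //.
by rewrite (setIidPr (pry_Bn _ _ bQ)).
Qed.

Lemma fiber_sum (X Y : finType) (A : {set X}) (B : {set Y}) (f : X -> Y) c :
  (forall x, x \in A -> f x \in B) ->
  (forall y, y \in B -> #|[set x in A | f x == y]| = c) -> #|A| = c * #|B|.
Proof.
move=> fAB fib.
rewrite -sum1_card (partition_big f (mem B)) //=.
rewrite mulnC -sum_nat_const; apply: eq_bigr => y yB.
rewrite -(fib y yB) -sum1_card; apply: eq_bigl => x; by rewrite inE.
Qed.

End Comb.
Arguments pinj {N} Q. Arguments hook {N} Q. Arguments boxed {N} n Q.
Arguments good {N} n k Q. Arguments SS {N} n k i. Arguments Bn {N} n.
Arguments mem_diagram {N}. Arguments pinj_inj1 {N Q}. Arguments pinj_inj2 {N Q}.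
Arguments card_prx {N Q}. Arguments card_pry {N Q}. Arguments pinj_sub {N Q R}.
Arguments mem_prx {N}. Arguments mem_pry {N}. Arguments pinj_add {N Q x y}.
Arguments hook_nodiag {N Q a}. Arguments card_Bn {N n}. Arguments prx_Bn {N n Q}. Arguments pry_Bn {N n Q}.
Arguments card_boxed {N n Q}. Arguments card_free {N n Q}. Arguments card_freey {N n Q}.


Definition c1 {N} (m : 'I_N) (Q : {set 'I_N * 'I_N}) := [exists y, (m, y) \in Q].
Definition remm {N} (m : 'I_N) (Q : {set 'I_N * 'I_N}) :=
  [set a in Q | (a.1 != m) && (a.2 != m)].

Section Gen.
Variable N : nat.
Local Notation T := ('I_N * 'I_N)%type.
Implicit Types Q R : {set T}.

Lemma hook_sub R Q : R \subset Q -> hook Q -> hook R.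
Proof.
move=> sub; rewrite /hook -!subset0 => H; apply: subset_trans H.
apply: setISS; apply: imsetS; apply/subsetP => a; rewrite !inE;
  by case/andP => /(subsetP sub) -> ->.
Qed.

Lemma Qminus_U1 p Q : Qminus (p |: Q) = if p.2 <= p.1 then p |: Qminus Q else Qminus Q.
Proof.
apply/setP => a; case: ifP => h; rewrite !inE; case: eqP => [->|] //=; by rewrite ?h ?andbF.
Qed.

Lemma Qplus_U1 p Q : Qplus (p |: Q) = if p.1 <= p.2 then p |: Qplus Q else Qplus Q.
Proof.
apply/setP => a; case: ifP => h; rewrite !inE; case: eqP => [->|] //=; by rewrite ?h ?andbF.
Qed.

Lemma pry_U1 p Q : pry (p |: Q) = p.2 |: pry Q.
Proof. by rewrite /pry imsetU1. Qed.

Lemma prx_U1 p Q : prx (p |: Q) = p.1 |: prx Q.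
Proof. by rewrite /prx imsetU1. Qed.

Lemma Qminus_sub Q : Qminus Q \subset Q.
Proof. by apply/subsetP => a; rewrite inE => /andP[]. Qed.

Lemma Qplus_sub Q : Qplus Q \subset Q.
Proof. by apply/subsetP => a; rewrite inE => /andP[]. Qed.

End Gen.
Arguments hook_sub {N R Q}. Arguments Qminus_U1 {N}. Arguments Qplus_U1 {N}.
Arguments pry_U1 {N}. Arguments prx_U1 {N}. Arguments Qminus_sub {N}. Arguments Qplus_sub {N}.


Section Step.
Set Implicit Arguments. Unset Strict Implicit.
Variables (N n : nat) (Hn : n < N).
Local Notation T := ('I_N * 'I_N)%type.
Implicit Types Q R : {set T}.
Let m : 'I_N := Ordinal Hn.

Lemma eqm (a : 'I_N) : (a == m) = (nat_of_ord a == n).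
Proof. by []. Qed.

Lemma boxS Q a : boxed n.+1 Q -> a \in Q -> (a.1 <= n) && (a.2 <= n).
Proof. by move=> /forallP/(_ a)/implyP H aQ; exact: H aQ. Qed.

Lemma box_n Q a : boxed n Q -> a \in Q -> (a.1 != m) && (a.2 != m).
Proof.
move=> /forallP/(_ a)/implyP H aQ; move: (H aQ); rewrite !eqm => /andP[h1 h2].
apply/andP; split; apply/eqP => e; lia.
Qed.

Lemma boxed_S Q : boxed n Q -> boxed n.+1 Q.
Proof.
move=> /forallP H; apply/forallP => a; apply/implyP => aQ.
move/implyP: (H a) => /(_ aQ)/andP[h1 h2]; apply/andP; split; lia.
Qed.

Lemma boxed_rem Q : boxed n.+1 Q -> boxed n (remm m Q).
Proof.
move=> bQ; apply/forallP => a; apply/implyP; rewrite inE => /andP[aQ].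
rewrite !eqm => /andP[/eqP h1 /eqP h2]; case/andP: (boxS bQ aQ) => h3 h4.
apply/andP; split; lia.
Qed.

Lemma rem_sub Q : remm m Q \subset Q.
Proof. by apply/subsetP => a; rewrite inE => /andP[]. Qed.

Lemma good_rem Q k p : good n.+1 k Q -> p \notin remm m Q -> Q = p |: remm m Q ->
  good n k (remm m Q).
Proof.
case/and4P => pQ cQ hQ bQ pn eQ; apply/and4P; split.
- exact: pinj_sub (rem_sub Q) pQ.
- by move: cQ; rewrite {1}eQ cardsU1 pn /= add1n addSn eqSS.
- exact: hook_sub (rem_sub Q) hQ.
- exact: boxed_rem.
Qed.

Lemma notm_pry R : boxed n R -> m \notin pry R.
Proof.
move=> bR; apply/imsetP => [[a aR e]]; move: (box_n bR aR); by rewrite -e eqxx andbF.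
Qed.

Lemma notm_prx R : boxed n R -> m \notin prx R.
Proof.
move=> bR; apply/imsetP => [[a aR e]]; move: (box_n bR aR); by rewrite -e eqxx.
Qed.

Lemma add2 R k x : good n k R -> x \in Bn n :\: prx R ->
  [/\ good n.+1 k ((x, m) |: R), Qminus ((x, m) |: R) = Qminus R,
      pry ((x, m) |: R) = m |: pry R, ~~ c1 m ((x, m) |: R) & remm m ((x, m) |: R) = R].
Proof.
case/and4P => pR cR hR bR; rewrite !inE => /andP[xR xn].
have xm : x != m by rewrite eqm; apply/eqP => e; lia.
have nin : (x, m) \notin R by apply/negP => /(box_n bR) /andP[_]; rewrite eqxx.
have qm : Qminus ((x, m) |: R) = Qminus R.
  rewrite Qminus_U1 /=; case: ifP => // h; lia.
split => //.
- apply/and4P; split.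
  + apply: pinj_add => //; exact: notm_pry.
  + by rewrite cardsU1 nin /= add1n addSn eqSS.
  + rewrite /hook qm Qplus_U1 /=; case: ifP => h; last by [].
    rewrite pry_U1 /=; apply/eqP/setP => z; rewrite !inE.
    have bm : boxed n (Qminus R).
      apply/forallP => a; apply/implyP => /(subsetP (Qminus_sub R)) aR;
      by move/forallP: bR => /(_ a)/implyP/(_ aR).
    case: eqP => [->|_] /=; first by rewrite (negbTE (notm_prx bm)).
    by move/eqP/setP: hR => /(_ z); rewrite !inE.
  + apply/forallP => a; rewrite in_setU1; apply/implyP => /orP[/eqP -> /=|aR].
      apply/andP; split; lia.
    by move/forallP: bR => /(_ a)/implyP/(_ aR)/andP[h1 h2]; apply/andP; split; lia.
- by rewrite pry_U1.
- apply/existsP => [[y]]; rewrite in_setU1 => /orP[/eqP [e _]|]; first by rewrite e eqxx in xm.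
  by move/(box_n bR); rewrite eqxx.
- apply/setP => a; rewrite !inE; case: eqP => [->|_] /=; first by rewrite eqxx andbF (negbTE nin).
  case aR: (a \in R) => //; by rewrite (box_n bR aR).
Qed.

Lemma hookP Q p q : hook Q -> p \in Q -> q \in Q -> p.2 <= p.1 -> q.1 <= q.2 -> p.1 != q.2.
Proof.
move=> /eqP H pQ qQ hp hq; apply/eqP => e.
have : p.1 \in prx (Qminus Q) :&: pry (Qplus Q).
  rewrite inE; apply/andP; split; apply/imsetP; [exists p|exists q] => //;
  by rewrite inE ?pQ ?qQ.
by rewrite H inE.
Qed.

Lemma add1 R k y : good n k R -> y \in Bn n :\: pry R ->
  [/\ good n.+1 k ((m, y) |: R), Qminus ((m, y) |: R) = (m, y) |: Qminus R,
      pry ((m, y) |: R) = y |: pry R, c1 m ((m, y) |: R) & remm m ((m, y) |: R) = R].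
Proof.
case/and4P => pR cR hR bR; rewrite !inE => /andP[yR yn].
have ym : y != m by rewrite eqm; apply/eqP => e; lia.
have nin : (m, y) \notin R by apply/negP => /(box_n bR) /andP[]; rewrite eqxx.
have qm : Qminus ((m, y) |: R) = (m, y) |: Qminus R.
  rewrite Qminus_U1 /=; case: ifP => // h; lia.
split => //.
- apply/and4P; split.
  + apply: pinj_add => //; exact: notm_prx.
  + by rewrite cardsU1 nin /= add1n addSn eqSS.
  + rewrite /hook qm Qplus_U1 /=; case: ifP => h; first lia.
    rewrite prx_U1 /=; apply/eqP/setP => z; rewrite !inE.
    have bm : boxed n (Qplus R).
      apply/forallP => a; apply/implyP => /(subsetP (Qplus_sub R)) aR;
      by move/forallP: bR => /(_ a)/implyP/(_ aR).
    case: eqP => [->|_] /=; first by rewrite (negbTE (notm_pry bm)).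
    by move/eqP/setP: hR => /(_ z); rewrite !inE.
  + apply/forallP => a; rewrite in_setU1; apply/implyP => /orP[/eqP -> /=|aR].
      apply/andP; split; lia.
    by move/forallP: bR => /(_ a)/implyP/(_ aR)/andP[h1 h2]; apply/andP; split; lia.
- by rewrite pry_U1.
- by apply/existsP; exists y; rewrite setU11.
- apply/setP => a; rewrite !inE; case: eqP => [->|_] /=; first by rewrite eqxx (negbTE nin).
  case aR: (a \in R) => //; by rewrite (box_n bR aR).
Qed.

Lemma remove1 Q k y : good n.+1 k Q -> (m, y) \in Q ->
  [/\ y \in Bn n :\: pry (remm m Q), Q = (m, y) |: remm m Q & good n k (remm m Q)].
Proof.
move=> gQ yQ; have /and4P[pQ cQ hQ bQ] := gQ.
have ym : m != y by have := hook_nodiag hQ yQ.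
have yn : y < n by move: (boxS bQ yQ) ym => /= /andP[_ h]; rewrite eq_sym eqm => /eqP e; lia.
have eQ : Q = (m, y) |: remm m Q.
  apply/setP => a; rewrite in_setU1 inE; case: (eqVneq a (m, y)) => [->|ne] /=; first by rewrite yQ.
  case aQ: (a \in Q) => //=; symmetry; apply/andP; split.
    apply: contra_neq ne => e; apply: (pinj_inj1 pQ) => //.
  apply/eqP => e.
  have h1 : (m, y).2 <= (m, y).1 by exact: ltnW yn.
  have h2 : a.1 <= a.2 by rewrite e; move: (boxS bQ aQ) => /andP[].
  by have := hookP hQ yQ aQ h1 h2; rewrite e eqxx.
split => //.
- rewrite !inE yn andbT; apply/imsetP => [[a]]; rewrite inE => /andP[aQ /andP[a1 _]] e.
  suff : a = (m, y) by move=> ea; rewrite ea eqxx in a1.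
  exact: (pinj_inj2 pQ).
- apply: (good_rem gQ _ eQ); by rewrite inE eqxx /= andbF.
Qed.

Lemma remove2 Q k x : good n.+1 k Q -> ~~ c1 m Q -> (x, m) \in Q ->
  [/\ x \in Bn n :\: prx (remm m Q), Q = (x, m) |: remm m Q & good n k (remm m Q)].
Proof.
move=> gQ nc xQ; have /and4P[pQ cQ hQ bQ] := gQ.
have xm : x != m by have := hook_nodiag hQ xQ.
have xn : x < n by move: (boxS bQ xQ) xm => /= /andP[h _]; rewrite eqm => /eqP e; lia.
have eQ : Q = (x, m) |: remm m Q.
  apply/setP => a; rewrite in_setU1 inE; case: (eqVneq a (x, m)) => [->|ne] /=; first by rewrite xQ.
  case aQ: (a \in Q) => //=; symmetry; apply/andP; split.
    apply/eqP => e; move/existsP: nc; apply; exists a.2; by rewrite -e -surjective_pairing.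
  apply: contra_neq ne => e; apply: (pinj_inj2 pQ) => //.
split => //.
- rewrite !inE xn andbT; apply/imsetP => [[a]]; rewrite inE => /andP[aQ /andP[_ a2]] e.
  suff : a = (x, m) by move=> ea; rewrite ea eqxx in a2.
  exact: (pinj_inj1 pQ).
- apply: (good_rem gQ _ eQ); apply/negP; rewrite inE => /andP[_ /andP[_]]; by rewrite eqxx.
Qed.

Lemma c1_transfer Q1 Q2 : Qminus Q1 = Qminus Q2 -> boxed n.+1 Q2 -> c1 m Q2 -> c1 m Q1.
Proof.
move=> e b2 /existsP [y yQ]; apply/existsP; exists y.
have : (m, y) \in Qminus Q2 by rewrite inE yQ /=; move: (boxS b2 yQ) => /andP[].
by rewrite -e inE => /andP[].
Qed.

Lemma boxed_down Q k : good n.+1 k Q -> ~~ c1 m Q -> m \notin pry Q -> boxed n Q.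
Proof.
case/and4P => _ _ _ bQ nc np; apply/forallP => a; apply/implyP => aQ.
have h2 : a.2 != m by apply: contraNneq np => <-; apply: imset_f.
have h1 : a.1 != m.
  apply/eqP => e; move/existsP: nc; apply; exists a.2; by rewrite -e -surjective_pairing.
move: h1 h2 (boxS bQ aQ); rewrite !eqm => /eqP h1 /eqP h2 /andP[h3 h4]; apply/andP; split; lia.
Qed.

Lemma SSE n' k i (PQ : {set T} * {set T}) : (PQ \in @SS N n' k i) = [&& good n' k PQ.1, good n' k PQ.2,
   Qminus PQ.1 == Qminus PQ.2, #|Qminus PQ.1| == i & pry PQ.1 == pry PQ.2].
Proof. by rewrite inE. Qed.

Definition P1s := [set PQ : {set T} * {set T} | c1 m PQ.1].
Definition P2s := [set PQ : {set T} * {set T} | m \in pry PQ.1].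
Definition ff (PQ : {set T} * {set T}) := (remm m PQ.1, remm m PQ.2).

Lemma C3 k i : #|(@SS N n.+1 k i :\: P1s) :\: P2s| = if k is k'.+1 then #|@SS N n k' i| else 0.
Proof.
case: k => [|k].
  apply/eqP; rewrite cards_eq0; apply/eqP/setP => [[Q1 Q2]]; rewrite !inE /=.
  apply/negP => /andP[nP2 /andP[nP1 /and5P[g1 g2 _ _ _]]].
  have b1 := boxed_down g1 nP1 nP2.
  case/and4P: g1 => p1 c1' _ _; have := card_boxed (ltnW Hn) p1 b1; move: c1'; rewrite addn0 => /eqP ->.
  by rewrite ltnn.
apply: eq_card => -[Q1 Q2]; rewrite !inE /=; apply/idP/idP.
  case/andP => nP2 /andP[nP1 /and5P[g1 g2 /eqP em ci /eqP ey]].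
  have nc2 : ~~ c1 m Q2 by apply: contra nP1; apply: c1_transfer => //; case/and4P: g2.
  have np2 : m \notin pry Q2 by rewrite -ey.
  have b1 := boxed_down g1 nP1 nP2; have b2 := boxed_down g2 nc2 np2.
  move: g1 g2 => /and4P[p1 c1' h1 _] /and4P[p2 c2' h2 _].
  have e1 : #|Q1| + k == n by rewrite -eqSS -addnS.
  have e2 : #|Q2| + k == n by rewrite -eqSS -addnS.
  by rewrite /good p1 p2 h1 h2 b1 b2 e1 e2 ci ey em !eqxx.
case/and5P => g1 g2 em ci ey.
move: g1 g2 => /and4P[p1 c1' h1 b1] /and4P[p2 c2' h2 b2].
rewrite (notm_pry b1) /=; apply/andP; split.
  by apply/existsP => [[y /(box_n b1)]]; rewrite eqxx.
have e1 : #|Q1| + k.+1 == n.+1 by rewrite addnS eqSS.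
have e2 : #|Q2| + k.+1 == n.+1 by rewrite addnS eqSS.
by rewrite /good p1 p2 h1 h2 (boxed_S b1) (boxed_S b2) em ci ey e1 e2.
Qed.

Lemma memP1 PQ : (PQ \in P1s) = c1 m PQ.1. Proof. by rewrite inE. Qed.
Lemma memP2 PQ : (PQ \in P2s) = (m \in pry PQ.1). Proof. by rewrite inE. Qed.

Lemma free_k R k : good n k R -> #|Bn n :\: prx R| = k.
Proof. case/and4P => p /eqP c _ b; rewrite (card_free (ltnW Hn) p b); lia. Qed.

Lemma freey_k R k : good n k R -> #|Bn n :\: pry R| = k.
Proof. case/and4P => p /eqP c _ b; rewrite (card_freey (ltnW Hn) p b); lia. Qed.

Lemma good_boxed n' k R : good n' k R -> boxed n' R.
Proof. by case/and4P. Qed.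

Lemma decomp2 k i Q1 Q2 : (Q1, Q2) \in @SS N n.+1 k i -> ~~ c1 m Q1 -> m \in pry Q1 ->
  exists x1 x2, [/\ x1 \in Bn n :\: prx (remm m Q1), x2 \in Bn n :\: prx (remm m Q2),
     Q1 = (x1, m) |: remm m Q1, Q2 = (x2, m) |: remm m Q2 & ff (Q1, Q2) \in @SS N n k i].
Proof.
rewrite SSE /= => /and5P[g1 g2 /eqP em ci /eqP ey] nc1 np1.
have nc2 : ~~ c1 m Q2 by apply: contra nc1; apply: c1_transfer => //; case/and4P: g2.
have np2 : m \in pry Q2 by rewrite -ey.
move: (np1) (np2); rewrite !mem_pry => /existsP[x1 x1Q] /existsP[x2 x2Q].
have [X1 E1 G1] := remove2 g1 nc1 x1Q.
have [X2 E2 G2] := remove2 g2 nc2 x2Q.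
exists x1, x2; split => //.
have [_ qm1 py1 _ _] := add2 G1 X1; have [_ qm2 py2 _ _] := add2 G2 X2.
rewrite -E1 in qm1 py1; rewrite -E2 in qm2 py2.
rewrite SSE /= G1 G2 -qm1 -qm2 ci em eqxx /=.
have -> : pry (remm m Q1) = pry Q1 :\ m by rewrite py1 setU1K // notm_pry // (good_boxed G1).
have -> : pry (remm m Q2) = pry Q2 :\ m by rewrite py2 setU1K // notm_pry // (good_boxed G2).
by rewrite ey.
Qed.

Lemma C2 k i : #|(@SS N n.+1 k i :\: P1s) :&: P2s| = k * k * #|@SS N n k i|.
Proof.
apply: (@fiber_sum _ _ _ _ ff).
  move=> [Q1 Q2]; rewrite in_setI in_setD memP1 memP2 /= => /andP[/andP[nc1 HQ] np1].
  by have [x1 [x2 [_ _ _ _ ->]]] := decomp2 HQ nc1 np1.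
move=> [R1 R2] HR; have := HR; rewrite SSE /= => /and5P[g1 g2 /eqP em ci /eqP ey].
pose g (xx : 'I_N * 'I_N) := ((xx.1, m) |: R1, (xx.2, m) |: R2).
have -> : [set x in (@SS N n.+1 k i :\: P1s) :&: P2s | ff x == (R1, R2)] =
    [set g xx | xx in setX (Bn n :\: prx R1) (Bn n :\: prx R2)].
  apply/setP => -[Q1 Q2]; rewrite inE in_setI in_setD memP1 memP2 /=; apply/idP/imsetP.
    case/andP => /andP[/andP[nc1 HQ] np1] /eqP [e1 e2].
    have [x1 [x2 [X1 X2 E1 E2 _]]] := decomp2 HQ nc1 np1.
    exists (x1, x2); first by rewrite inE -e1 -e2 X1 X2.
    by rewrite /g /= -e1 -e2 -E1 -E2.
  case=> -[x1 x2]; rewrite inE /= => /andP[X1 X2] [-> ->].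
  have [G1 qm1 py1 nc1 r1] := add2 g1 X1; have [G2 qm2 py2 nc2 r2] := add2 g2 X2.
  rewrite /ff /= r1 r2 eqxx nc1 py1 setU11 andbT /= SSE /= G1 G2 qm1 qm2 py2 ci py1 ey em !eqxx //.
rewrite card_in_imset; first by rewrite cardsX (free_k g1) (free_k g2).
move=> [x1 x2] [y1 y2]; rewrite !inE /= => /andP[/andP[_ X1] _] /andP[/andP[_ Y1] _] [e1 e2].
have nin1 : (x1, m) \notin R1 by apply/negP => /(box_n (good_boxed g1))/andP[_]; rewrite eqxx.
have nin2 : (x2, m) \notin R2 by apply/negP => /(box_n (good_boxed g2))/andP[_]; rewrite eqxx.
have : (x1, m) \in (y1, m) |: R1 by rewrite -e1 setU11.
have : (x2, m) \in (y2, m) |: R2 by rewrite -e2 setU11.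
by rewrite !in_setU1 (negbTE nin1) (negbTE nin2) !orbF => /eqP [->] /eqP [->].
Qed.

Lemma nin_Qminus k R y : good n k R -> (m, y) \notin Qminus R.
Proof.
move=> gR; apply/negP => /(subsetP (Qminus_sub R)) /(box_n (good_boxed gR)) /andP[].
by rewrite eqxx.
Qed.

Lemma decomp1 k i Q1 Q2 : (Q1, Q2) \in @SS N n.+1 k i.+1 -> c1 m Q1 ->
  exists y, [/\ y \in Bn n :\: pry (remm m Q1), y \in Bn n :\: pry (remm m Q2),
     Q1 = (m, y) |: remm m Q1, Q2 = (m, y) |: remm m Q2 & ff (Q1, Q2) \in @SS N n k i].
Proof.
rewrite SSE /= => /and5P[g1 g2 /eqP em ci /eqP ey] /existsP[y yQ1].
have yQ2 : (m, y) \in Q2.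
  have : (m, y) \in Qminus Q1.
    by rewrite inE yQ1 /=; move: (boxS (good_boxed g1) yQ1) => /andP[].
  by rewrite em => /(subsetP (Qminus_sub Q2)).
have [Y1 E1 G1] := remove1 g1 yQ1.
have [Y2 E2 G2] := remove1 g2 yQ2.
exists y; split => //.
have [_ qm1 py1 _ _] := add1 G1 Y1; have [_ qm2 py2 _ _] := add1 G2 Y2.
rewrite -E1 in qm1 py1; rewrite -E2 in qm2 py2.
have n1 := nin_Qminus y G1; have n2 := nin_Qminus y G2.
have e1 : Qminus (remm m Q1) = Qminus Q1 :\ (m, y) by rewrite qm1 setU1K.
have e2 : Qminus (remm m Q2) = Qminus Q2 :\ (m, y) by rewrite qm2 setU1K.
move: (Y1) (Y2); rewrite !inE => /andP[y1 _] /andP[y2 _].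
have f1 : pry (remm m Q1) = pry Q1 :\ y by rewrite py1 setU1K.
have f2 : pry (remm m Q2) = pry Q2 :\ y by rewrite py2 setU1K.
rewrite /= G1 G2 f1 f2 ey eqxx e1 e2 em eqxx /=.
by move: ci; rewrite em qm2 cardsU1 n2 setU1K // andbT.
Qed.

Lemma C1 k i : #|@SS N n.+1 k i :&: P1s| = if i is i'.+1 then k * #|@SS N n k i'| else 0.
Proof.
case: i => [|i].
  apply/eqP; rewrite cards_eq0; apply/eqP/setP => -[Q1 Q2]; rewrite in_setI memP1 SSE /= in_set0.
  apply/negP => /andP[/and5P[g1 _ _ ci _] /existsP[y yQ1]].
  have : (m, y) \in Qminus Q1.
    by rewrite inE yQ1 /=; move: (boxS (good_boxed g1) yQ1) => /andP[].
  by move: ci; rewrite cards_eq0 => /eqP ->; rewrite in_set0.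
apply: (@fiber_sum _ _ _ _ ff).
  move=> [Q1 Q2]; rewrite in_setI memP1 /= => /andP[HQ c].
  by have [y [_ _ _ _ ->]] := decomp1 HQ c.
move=> [R1 R2] HR; have := HR; rewrite SSE /= => /and5P[g1 g2 /eqP em ci /eqP ey].
pose g (y : 'I_N) := ((m, y) |: R1, (m, y) |: R2).
have -> : [set x in @SS N n.+1 k i.+1 :&: P1s | ff x == (R1, R2)] =
    [set g y | y in Bn n :\: pry R1].
  apply/setP => -[Q1 Q2]; rewrite inE in_setI memP1 /=; apply/idP/imsetP.
    case/andP => /andP[HQ c] /eqP [e1 e2].
    have [y [Y1 Y2 E1 E2 _]] := decomp1 HQ c.
    exists y; first by rewrite -e1.
    by rewrite /g /= -e1 -e2 -E1 -E2.
  case=> y Y1 [-> ->].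
  have Y2 : y \in Bn n :\: pry R2 by rewrite -ey.
  have [G1 qm1 py1 c1' r1] := add1 g1 Y1; have [G2 qm2 py2 c2' r2] := add1 g2 Y2.
  have n1 := nin_Qminus y g1.
  rewrite /ff /= r1 r2 eqxx c1' andbT SSE /= G1 G2 qm1 qm2 py1 py2 cardsU1 n1 /= add1n eqSS ci ey em !eqxx //.
rewrite card_in_imset; first by rewrite (freey_k g1).
move=> y1 y2 Y1 _ [e1 _].
have nin1 : (m, y1) \notin R1 by apply/negP => /(box_n (good_boxed g1))/andP[]; rewrite eqxx.
have : (m, y1) \in (m, y2) |: R1 by rewrite -e1 setU11.
by rewrite in_setU1 (negbTE nin1) orbF => /eqP [].
Qed.

Lemma SS_rec k i : #|@SS N n.+1 k i| =
  (if i is i'.+1 then k * #|@SS N n k i'| else 0) + k * k * #|@SS N n k i|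
  + (if k is k'.+1 then #|@SS N n k' i| else 0).
Proof.
rewrite -C1 -C2 -C3 -addnA (cardsID P2s) (cardsID P1s) //.
Qed.

End Step.

Import GRing.Theory.

Lemma JS_gt n k : (n < k)%N -> JS n k = 0%R.
Proof.
case: n => [|n] /= h; first by case: k h.
by rewrite h orbT.
Qed.

Lemma JS_rec n k : JS n.+1 k =
  (if k is k'.+1 then JS n k' + (k%:R * (k%:R%:P + 'X)) * JS n k else 0)%R.
Proof.
rewrite /=; case: k => [|k] //=.
case: ifP => h //; by rewrite !JS_gt ?mulr0 ?addr0 // ltnW.
Qed.

Lemma coef_step (p : {poly int}) k i :
  (((k%:R * (k%:R%:P + 'X)) * p)`_i =
   (k * k)%:R * p`_i + k%:R * (if i is i'.+1 then p`_i' else 0))%R.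
Proof.
rewrite -mulrA mulr_natl coefMn mulrDl coefD coefCM coefXM.
by case: i => [|i] /=; rewrite -mulr_natl natrM; ring.
Qed.

Lemma box0 N (Q : {set 'I_N * 'I_N}) : boxed 0 Q -> Q = set0.
Proof.
move=> /forallP H; apply/setP => a; rewrite in_set0; apply/negP => aQ.
by move/implyP: (H a) => /(_ aQ).
Qed.

Lemma good0 N k : @good N 0 k set0 = (k == 0).
Proof.
rewrite /good cards0 add0n.
have -> : pinj (set0 : {set 'I_N * 'I_N}) by apply/existsP; exists 1%g; exact: sub0set.
have -> : hook (set0 : {set 'I_N * 'I_N}).
  rewrite /hook -subset0; apply/subsetP => x; rewrite inE => /andP[/imsetP [a]].
  by rewrite inE in_set0.
have -> : boxed 0 (set0 : {set 'I_N * 'I_N}) by apply/forallP => a; rewrite in_set0.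
by rewrite /= !andbT.
Qed.

Lemma SS0 N k i : #|@SS N 0 k i| = ((k == 0) && (i == 0)).
Proof.
have sub : @SS N 0 k i \subset [set (set0, set0)].
  apply/subsetP => -[Q1 Q2]; rewrite SSE /= => /and5P[g1 g2 _ _ _].
  by rewrite (@box0 _ _ (good_boxed g1)) (@box0 _ _ (good_boxed g2)) set11.
have mem : ((set0, set0) \in @SS N 0 k i) = ((k == 0) && (i == 0)).
  rewrite SSE /= good0 eqxx.
  have -> : Qminus (set0 : {set 'I_N * 'I_N}) = set0.
    by apply/setP => a; rewrite !inE.
  by rewrite cards0 eqxx [0 == i]eq_sym andbT; case: (k == 0).
move: sub; rewrite subset1 => /orP[/eqP E|/eqP E].
  by rewrite E set11 in mem; rewrite E cards1 -mem.
by rewrite E in_set0 in mem; rewrite E cards0 -mem.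
Qed.


Lemma good_sh n k (Q : {set 'I_n * 'I_n}) : (k <= n)%N -> good n k Q = simply_hooked k Q.
Proof.
move=> kn; rewrite /good /simply_hooked.
have -> : boxed n Q by apply/forallP => a; apply/implyP => _; rewrite !ltn_ord.
have -> : (#|Q| + k == n) = (#|Q| == n - k) by apply/eqP/eqP; lia.
by rewrite andbT andbA.
Qed.


Local Open Scope ring_scope.
Lemma mainN N n : (n <= N)%N -> forall k i, (JS n k)`_i = (#|@SS N n k i|)%:Z.
Proof.
elim: n => [|n IH] le k i.
  rewrite SS0; case: k => [|k] /=; rewrite ?coef1 ?coef0; by case: i.
have IH' := IH (ltnW le).
rewrite JS_rec (SS_rec le).
case: k => [|k]; case: i => [|i]; rewrite ?coef0 ?coefD ?coef_step ?IH' /=.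
all: lia.
Qed.


Theorem theorem8 (n k i : nat) :
  (0 < k)%N -> (k <= n)%N -> (1 <= i)%N -> (i <= n - k)%N ->
  (JS n k)`_i =
  (#|[set PQ : {set 'I_n * 'I_n} * {set 'I_n * 'I_n} |
       [&& simply_hooked k PQ.1, simply_hooked k PQ.2,
           Qminus PQ.1 == Qminus PQ.2,
           #|Qminus PQ.1| == i, #|Qminus PQ.2| == i &
           pry PQ.1 == pry PQ.2]]|)%:Z.
Proof.
move=> _ kn _ _; rewrite (@mainN n n (leqnn n)); congr (Posz _).
apply: eq_card => PQ; rewrite SSE inE !good_sh //.
case: eqP => [e|_] /=; last by rewrite !andbF.
by rewrite e; case: (#|Qminus PQ.2| == i); rewrite /= ?andbF.
Qed.
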